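(* For all $n\ge1$ and $a>0$, writing $R_k=R_k(a)$, $$R_{n-1}R_{n+1}(R_nR_{n-1}+8n)(R_{n+1}R_n+8n+8)=\Big[8a^2R_n+R_nR_{n-1}R_{n+1}-4(aR_n+n+1)R_{n+1}-4(aR_n+n)R_{n-1}\Big]^2.$$
   Context: Fix $a>0$. Let $w(x)=e^{-x^2}\chi_{\mathbb{R}\setminus(-a,a)}(x)$. Let $P_n$ be the monic orthogonal polynomials for $w$ on $\mathbb{R}$, with $h_n=\int P_n^2w\,dx$. Define $$R_n(a)=\frac{2e^{-a^2}P_n(a)^2}{h_n(a)}.$$ *)

(* Defs.v *)
From Stdlib Require Import Reals.
Open Scope R_scope.

Definition int_to_pinf (f : R -> R) (a l : R) : Prop :=
  (forall b, inhabited (Riemann_integrable f a b)) /\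
  forall eps, 0 < eps -> exists M, forall b (pr : Riemann_integrable f a b),
      M <= b -> Rabs (RiemannInt pr - l) < eps.

Definition int_from_minf (f : R -> R) (b l : R) : Prop :=
  (forall c, inhabited (Riemann_integrable f c b)) /\
  forall eps, 0 < eps -> exists M, forall c (pr : Riemann_integrable f c b),
      c <= M -> Rabs (RiemannInt pr - l) < eps.

(* Gaussian factor; the weight is w = gauss * indicator of R \ (-a,a), the
   restriction being implemented by integrating over (-oo,-a] and [a,+oo). *)
Definition gauss (x : R) : R := exp (- x ^ 2).

Definition wint (a : R) (f : R -> R) (l : R) : Prop :=
  exists l1 l2,
    int_from_minf (fun x => f x * gauss x) (- a) l1 /\
    int_to_pinf (fun x => f x * gauss x) a l2 /\
    l = l1 + l2.

Fixpoint psum (c : nat -> R) (n : nat) (x : R) : R :=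
  match n with
  | O => 0
  | S m => psum c m x + c m * x ^ m
  end.

Definition monic_poly_deg (p : R -> R) (n : nat) : Prop :=
  exists c : nat -> R, forall x, p x = x ^ n + psum c n x.

Definition monic_OP_family (a : R) (P : nat -> R -> R) (h : nat -> R) : Prop :=
  forall k : nat,
    monic_poly_deg (P k) k /\
    (forall j : nat, (j < k)%nat -> wint a (fun x => P k x * x ^ j) 0) /\
    wint a (fun x => (P k x) ^ 2) (h k).

Definition Rn (a : R) (P : nat -> R -> R) (h : nat -> R) (k : nat) : R :=
  2 * exp (- a ^ 2) * (P k a) ^ 2 / h k.

(* Main.v *)
From Stdlib Require Import Reals Lra Lia Psatz FunctionalExtensionality ClassicalEpsilon.
From Coquelicot Require Import Coquelicot.
Require Import Defs.
Open Scope R_scope.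

Lemma pinf_ext f g a l : int_to_pinf f a l -> (forall x, f x = g x) -> int_to_pinf g a l.
Proof. intros H E. replace g with f; auto. apply functional_extensionality; auto. Qed.
Lemma minf_ext f g a l : int_from_minf f a l -> (forall x, f x = g x) -> int_from_minf g a l.
Proof. intros H E. replace g with f; auto. apply functional_extensionality; auto. Qed.

Lemma close_eq (l1 l2 : R) : (forall eps, 0 < eps -> exists I, Rabs (I - l1) < eps /\ Rabs (I - l2) < eps) -> l1 = l2.
Proof.
  intros H. destruct (Req_dec l1 l2) as [|Hn]; auto.
  assert (0 < Rabs (l1 - l2) / 2) by (assert (l1 - l2 <> 0) by lra; pose proof (Rabs_pos_lt _ H0); lra).
  destruct (H _ H0) as [I [H1 H2]]. exfalso.
  revert H1 H2 H0; unfold Rabs; repeat destruct Rcase_abs; lra.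
Qed.

Lemma pinf_unique f a l1 l2 : int_to_pinf f a l1 -> int_to_pinf f a l2 -> l1 = l2.
Proof.
  intros [Hi H1] [_ H2]. apply close_eq. intros eps He.
  destruct (H1 eps He) as [M1 HM1]. destruct (H2 eps He) as [M2 HM2].
  destruct (Hi (Rmax M1 M2)) as [pr]. exists (RiemannInt pr). split.
  - apply HM1. apply Rmax_l.
  - apply HM2. apply Rmax_r.
Qed.

Lemma minf_unique f a l1 l2 : int_from_minf f a l1 -> int_from_minf f a l2 -> l1 = l2.
Proof.
  intros [Hi H1] [_ H2]. apply close_eq. intros eps He.
  destruct (H1 eps He) as [M1 HM1]. destruct (H2 eps He) as [M2 HM2].
  destruct (Hi (Rmin M1 M2)) as [pr]. exists (RiemannInt pr). split.
  - apply HM1. apply Rmin_l.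
  - apply HM2. apply Rmin_r.
Qed.

Lemma lin_bound I1 I2 l1 l2 r eps :
  0 < eps -> Rabs (I1 - l1) < eps / (2 * (1 + Rabs r)) -> Rabs (I2 - l2) < eps / (2 * (1 + Rabs r)) ->
  Rabs (I1 + r * I2 - (l1 + r * l2)) < eps.
Proof.
  intros He H1 H2. pose proof (Rabs_pos r) as Hr.
  set (d := eps / (2 * (1 + Rabs r))) in *.
  assert (Hd : d * (2 * (1 + Rabs r)) = eps) by (unfold d; field; lra).
  replace (I1 + r * I2 - (l1 + r * l2)) with ((I1 - l1) + r * (I2 - l2)) by ring.
  eapply Rle_lt_trans. apply Rabs_triang. rewrite Rabs_mult.
  assert (Rabs r * Rabs (I2 - l2) <= Rabs r * d) by (apply Rmult_le_compat_l; lra).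
  nra.
Qed.

Lemma pinf_lin f g a l1 l2 r : int_to_pinf f a l1 -> int_to_pinf g a l2 ->
  int_to_pinf (fun x => f x + r * g x) a (l1 + r * l2).
Proof.
  intros [Hi1 H1] [Hi2 H2]. split.
  - intros b. destruct (Hi1 b) as [p1]; destruct (Hi2 b) as [p2]. constructor. apply RiemannInt_P10; auto.
  - intros eps He. assert (He' : 0 < eps / (2 * (1 + Rabs r))).
    { pose proof (Rabs_pos r). apply Rdiv_lt_0_compat; lra. }
    destruct (H1 _ He') as [M1 HM1]. destruct (H2 _ He') as [M2 HM2].
    exists (Rmax M1 M2). intros b pr Hb.
    destruct (Hi1 b) as [p1]; destruct (Hi2 b) as [p2].
    rewrite (RiemannInt_P13 p1 p2 pr). apply lin_bound; auto.
    + apply HM1. eapply Rle_trans; [apply Rmax_l | exact Hb].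
    + apply HM2. eapply Rle_trans; [apply Rmax_r | exact Hb].
Qed.

Lemma minf_lin f g a l1 l2 r : int_from_minf f a l1 -> int_from_minf g a l2 ->
  int_from_minf (fun x => f x + r * g x) a (l1 + r * l2).
Proof.
  intros [Hi1 H1] [Hi2 H2]. split.
  - intros b. destruct (Hi1 b) as [p1]; destruct (Hi2 b) as [p2]. constructor. apply RiemannInt_P10; auto.
  - intros eps He. assert (He' : 0 < eps / (2 * (1 + Rabs r))).
    { pose proof (Rabs_pos r). apply Rdiv_lt_0_compat; lra. }
    destruct (H1 _ He') as [M1 HM1]. destruct (H2 _ He') as [M2 HM2].
    exists (Rmin M1 M2). intros b pr Hb.
    destruct (Hi1 b) as [p1]; destruct (Hi2 b) as [p2].
    rewrite (RiemannInt_P13 p1 p2 pr). apply lin_bound; auto.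
    + apply HM1. eapply Rle_trans; [exact Hb | apply Rmin_l].
    + apply HM2. eapply Rle_trans; [exact Hb | apply Rmin_r].
Qed.

Lemma wint_ext a f g l : wint a f l -> (forall x, f x = g x) -> wint a g l.
Proof. intros H E. replace g with f; auto. apply functional_extensionality; auto. Qed.

Lemma wint_unique a f l1 l2 : wint a f l1 -> wint a f l2 -> l1 = l2.
Proof.
  intros [u1 [v1 [A1 [B1 C1]]]] [u2 [v2 [A2 [B2 C2]]]].
  rewrite (minf_unique _ _ _ _ A1 A2) in C1. rewrite (pinf_unique _ _ _ _ B1 B2) in C1. congruence.
Qed.

Lemma wint_lin a f g l1 l2 r : wint a f l1 -> wint a g l2 ->
  wint a (fun x => f x + r * g x) (l1 + r * l2).
Proof.
  intros [u1 [v1 [A1 [B1 C1]]]] [u2 [v2 [A2 [B2 C2]]]].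
  exists (u1 + r * u2), (v1 + r * v2). split; [|split].
  - eapply minf_ext. apply minf_lin; eauto. intros; simpl; ring.
  - eapply pinf_ext. apply pinf_lin; eauto. intros; simpl; ring.
  - subst; ring.
Qed.

Definition polyd (k : nat) (f : R -> R) : Prop := exists c, forall x, f x = psum c k x.

Lemma polyd_ext k f g : polyd k f -> (forall x, f x = g x) -> polyd k g.
Proof. intros [c Hc] E. exists c. intros x. rewrite <- E. auto. Qed.

Lemma psum_ext c d k x : (forall i, (i < k)%nat -> c i = d i) -> psum c k x = psum d k x.
Proof.
  induction k; simpl; intros H; auto. rewrite IHk by (intros; apply H; lia). rewrite H by lia. auto.
Qed.

Lemma psum_zero k x : psum (fun _ => 0) k x = 0.
Proof. induction k; simpl; auto. rewrite IHk. ring. Qed.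

Lemma polyd_zero k : polyd k (fun _ => 0).
Proof. exists (fun _ => 0). intros. rewrite psum_zero. auto. Qed.

Lemma psum_pad c k m x :
  psum (fun i => if (i <? k)%nat then c i else 0) (k + m) x = psum c k x.
Proof.
  induction m.
  - rewrite Nat.add_0_r. apply psum_ext. intros i Hi. apply Nat.ltb_lt in Hi. rewrite Hi. auto.
  - rewrite Nat.add_succ_r. simpl. rewrite IHm.
    replace ((k + m <? k)%nat) with false. ring. symmetry. apply Nat.ltb_ge. lia.
Qed.

Lemma polyd_mono k k' f : (k <= k')%nat -> polyd k f -> polyd k' f.
Proof.
  intros Hk [c Hc]. exists (fun i => if (i <? k)%nat then c i else 0). intros x.
  replace k' with (k + (k' - k))%nat by lia. rewrite psum_pad. auto.
Qed.

Lemma psum_add c d k x : psum (fun i => c i + d i) k x = psum c k x + psum d k x.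
Proof. induction k; simpl; [ring|]. rewrite IHk. ring. Qed.

Lemma psum_scal c r k x : psum (fun i => r * c i) k x = r * psum c k x.
Proof. induction k; simpl; [ring|]. rewrite IHk. ring. Qed.

Lemma polyd_add k f g : polyd k f -> polyd k g -> polyd k (fun x => f x + g x).
Proof. intros [c Hc] [d Hd]. exists (fun i => c i + d i). intros. rewrite psum_add, Hc, Hd. auto. Qed.

Lemma polyd_scal k r f : polyd k f -> polyd k (fun x => r * f x).
Proof. intros [c Hc]. exists (fun i => r * c i). intros. rewrite psum_scal, Hc. auto. Qed.

Lemma polyd_lin k f g r : polyd k f -> polyd k g -> polyd k (fun x => f x + r * g x).
Proof. intros. apply polyd_add; auto. apply polyd_scal; auto. Qed.

Lemma polyd_mon j : polyd (S j) (fun x => x ^ j).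
Proof.
  exists (fun i => if (i =? j)%nat then 1 else 0). intros x. simpl.
  rewrite Nat.eqb_refl. rewrite (psum_ext _ (fun _ => 0)). rewrite psum_zero. ring.
  intros i Hi. replace (i =? j)%nat with false. auto. symmetry. apply Nat.eqb_neq. lia.
Qed.

Lemma psum_shift c k x : psum (fun i => match i with O => 0 | S i => c i end) (S k) x = x * psum c k x.
Proof. induction k. simpl. ring. change (psum (fun i => match i with O => 0 | S i => c i end) (S (S k)) x) with
  (psum (fun i => match i with O => 0 | S i => c i end) (S k) x + c k * x ^ (S k)). rewrite IHk. simpl. ring. Qed.

Lemma polyd_mulx k f : polyd k f -> polyd (S k) (fun x => x * f x).
Proof. intros [c Hc]. eexists. intros x. rewrite psum_shift, Hc. auto. Qed.

Lemma polyd_mulxn j k f : polyd k f -> polyd (k + j) (fun x => x ^ j * f x).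
Proof.
  induction j; intros H.
  - rewrite Nat.add_0_r. eapply polyd_ext; eauto. intros; simpl; ring.
  - rewrite Nat.add_succ_r. eapply polyd_ext. apply polyd_mulx, IHj, H. intros; simpl; ring.
Qed.

Lemma polyd_mul m n f g : polyd m f -> polyd n g -> polyd (m + n) (fun x => f x * g x).
Proof.
  intros Hf [d Hd]. eapply polyd_ext with (f := fun x => f x * psum d n x); [| intros; rewrite Hd; auto].
  clear Hd g. induction n.
  - simpl. eapply polyd_ext. apply polyd_zero. intros; simpl; ring.
  - eapply polyd_ext. apply polyd_lin with (r := d n).
    + apply (polyd_mono (m + n)); [lia|]. apply IHn.
    + apply (polyd_mono (m + n)); [lia|]. apply polyd_mulxn, Hf.
    + intros; simpl; ring.
Qed.

Lemma psum_neg c k x : psum (fun i => (-1) ^ i * c i) k x = psum c k (- x).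
Proof. induction k; simpl; auto. rewrite IHk. replace (-x) with ((-1) * x) by ring. rewrite Rpow_mult_distr. ring. Qed.

Lemma polyd_neg k f : polyd k f -> polyd k (fun x => f (- x)).
Proof. intros [c Hc]. exists (fun i => (-1) ^ i * c i). intros x. rewrite psum_neg, Hc. auto. Qed.

Definition polyf f := exists k, polyd k f.

Fixpoint dpsum (c : nat -> R) (k : nat) (x : R) : R :=
  match k with O => 0 | S m => dpsum c m x + c m * (INR m * x ^ (pred m)) end.

Lemma psum_deriv c k x : derivable_pt_lim (psum c k) x (dpsum c k x).
Proof.
  induction k; simpl.
  - apply derivable_pt_lim_const.
  - apply (derivable_pt_lim_plus (psum c k) (fun x => c k * x ^ k)); auto.
    apply (derivable_pt_lim_scal (fun x => x ^ k)). apply derivable_pt_lim_pow.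
Qed.

Lemma dpsum_polyd c k : polyd (pred k) (dpsum c k).
Proof.
  induction k; simpl.
  - apply polyd_zero.
  - destruct k as [|m].
    + eapply polyd_ext. apply polyd_zero. intros; simpl; ring.
    + apply polyd_lin. apply (polyd_mono (pred (S m))); simpl; auto; lia.
      eapply polyd_ext. apply polyd_scal with (r := INR (S m)). apply polyd_mon. intros; simpl; auto.
Qed.

Fixpoint SA (c : nat -> R) (k : nat) : R := match k with O => 0 | S m => SA c m + Rabs (c m) end.

Lemma SA_pos c k : 0 <= SA c k.
Proof. induction k; simpl. lra. pose proof (Rabs_pos (c k)); lra. Qed.

Lemma psum_bound c k x : 1 <= x -> Rabs (psum c k x) <= SA c k * x ^ (pred k).
Proof.
  intros Hx. induction k; simpl. rewrite Rabs_R0; lra.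
  eapply Rle_trans. apply Rabs_triang. rewrite Rabs_mult, (Rabs_pos_eq (x ^ k)) by (apply pow_le; lra).
  assert (x ^ pred k <= x ^ k) by (apply Rle_pow; lia || lra).
  pose proof (SA_pos c k). pose proof (Rabs_pos (c k)).
  destruct k; simpl in *; nra.
Qed.

Lemma exp_pow_INR K t : exp (INR K * t) = exp t ^ K.
Proof. induction K. simpl. rewrite Rmult_0_l. apply exp_0.
  rewrite S_INR. replace ((INR K + 1) * t) with (INR K * t + t) by ring. rewrite exp_plus, IHK. simpl. ring. Qed.



Lemma exp_big (b : R) (k : nat) : 1 <= b ->
  exp (b ^ 2) * INR (S k) ^ (S k) >= b ^ k * b ^ k * b ^ 2.
Proof.
  intros Hb. set (K := S k). set (t := b ^ 2 / INR K).
  assert (HK : 0 < INR K) by (apply lt_0_INR; unfold K; lia).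
  assert (E : b ^ 2 = INR K * t) by (unfold t; field; lra).
  rewrite E at 1. rewrite exp_pow_INR.
  assert (Ht : 0 <= t) by (unfold t; apply Rdiv_le_0_compat; nra).
  assert (t ^ K <= exp t ^ K).
  { apply pow_incr. split; auto. pose proof (exp_ineq1_le t). lra. }
  assert (t ^ K * INR K ^ K = (b ^ 2) ^ K).
  { rewrite <- Rpow_mult_distr. f_equal. unfold t; field; lra. }
  assert ((b ^ 2) ^ K = b ^ k * b ^ k * b ^ 2).
  { rewrite <- pow_mult. rewrite <- !pow_add. f_equal. unfold K; lia. }
  assert (0 < INR K ^ K) by (apply pow_lt; lra).
  nra.
Qed.

Lemma decay c k eps M : 0 < eps -> exists b, M <= b /\ Rabs (psum c k b * gauss b) < eps.
Proof.
  intros He. set (C := SA c k * INR (S k) ^ (S k)).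
  assert (HC : 0 <= C) by (unfold C; pose proof (SA_pos c k); pose proof (pow_le (INR (S k)) (S k) (pos_INR _)); nra).
  set (b := Rmax M (Rmax 1 (C / eps + 1))).
  assert (Hb1 : 1 <= b) by (unfold b; eapply Rle_trans; [|apply Rmax_r]; apply Rmax_l).
  assert (Hb2 : C / eps + 1 <= b) by (unfold b; eapply Rle_trans; [|apply Rmax_r]; apply Rmax_r).
  exists b. split. apply Rmax_l.
  rewrite Rabs_mult. unfold gauss. rewrite (Rabs_pos_eq (exp _)) by (left; apply exp_pos).
  pose proof (psum_bound c k b Hb1) as HP.
  assert (b ^ pred k <= b ^ k) by (apply Rle_pow; lia || lra).
  assert (Hu : 1 <= b ^ k) by (apply pow_R1_Rle; lra).
  pose proof (SA_pos c k).
  assert (HP' : Rabs (psum c k b) <= SA c k * b ^ k) by nra.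
  pose proof (exp_big b k Hb1) as HE.
  assert (Hexp : exp (- b ^ 2) * exp (b ^ 2) = 1) by (rewrite <- exp_plus; replace (- b^2 + b^2) with 0 by ring; apply exp_0).
  assert (0 < exp (- b ^ 2)) by apply exp_pos.
  assert (HH1 : exp (- b ^ 2) * (b ^ k * b ^ k * b ^ 2) <= INR (S k) ^ (S k)).
  { assert (exp (- b ^ 2) * (exp (b ^ 2) * INR (S k) ^ (S k)) = INR (S k) ^ (S k)) by (rewrite <- Rmult_assoc, Hexp; ring).
    nra. }
  assert (HH2 : Rabs (psum c k b) * exp (- b ^ 2) * b <= C).
  { unfold C. assert (b ^ k * b ^ 2 >= b) by nra.
    assert (Rabs (psum c k b) * exp (- b ^ 2) <= SA c k * b ^ k * exp (- b ^ 2)) by nra.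
    assert (SA c k * (exp (- b ^ 2) * (b ^ k * b ^ k * b ^ 2)) <= SA c k * INR (S k) ^ (S k)) by (apply Rmult_le_compat_l; auto).
    assert (0 <= SA c k * b ^ k * exp (- b ^ 2)) by (apply Rmult_le_pos; [apply Rmult_le_pos|]; lra).
    assert (SA c k * b ^ k * exp (- b ^ 2) * b <= SA c k * b ^ k * exp (- b ^ 2) * (b ^ k * b ^ 2)) by (apply Rmult_le_compat_l; lra).
    assert (Rabs (psum c k b) * exp (- b ^ 2) * b <= SA c k * b ^ k * exp (- b ^ 2) * b) by (apply Rmult_le_compat_r; lra).
    nra. }
  assert (C < eps * b).
  { assert (C / eps * eps = C) by (field; lra). nra. }
  pose proof (Rabs_pos (psum c k b)). nra.
Qed.

Lemma gauss_deriv x : derivable_pt_lim gauss x (- 2 * x * gauss x).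
Proof. apply is_derive_Reals. unfold gauss. auto_derive. auto. simpl. ring. Qed.

Lemma gauss_cont x : continuity_pt gauss x.
Proof. apply derivable_continuous_pt. exists (- 2 * x * gauss x). apply gauss_deriv. Qed.

Lemma Fderiv f g x : derivable_pt_lim f x (g x) ->
  derivable_pt_lim (fun x => f x * gauss x) x ((g x - 2 * x * f x) * gauss x).
Proof.
  intros Hf. replace ((g x - 2 * x * f x) * gauss x) with (g x * gauss x + f x * (- 2 * x * gauss x)) by ring.
  apply (derivable_pt_lim_mult f gauss); auto. apply gauss_deriv.
Qed.

Lemma Fcont f g x : (forall x, derivable_pt_lim f x (g x)) -> continuity_pt g x ->
  continuity_pt (fun x => (g x - 2 * x * f x) * gauss x) x.
Proof.
  intros Hf Hg.
  assert (Cf : continuity_pt f x) by (apply derivable_continuous_pt; exists (g x); exact (Hf x)).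
  change (continuity_pt (mult_fct (minus_fct g (mult_fct (fun x => 2 * x) f)) gauss) x).
  apply continuity_pt_mult; [|apply gauss_cont].
  apply continuity_pt_minus; auto. apply continuity_pt_mult; auto.
  apply derivable_continuous_pt. exists (2 * 1). 
  apply (derivable_pt_lim_scal id). apply derivable_pt_lim_id.
Qed.

Lemma ftc f g u v (pr : Riemann_integrable (fun x => (g x - 2 * x * f x) * gauss x) u v) :
  u <= v -> (forall x, derivable_pt_lim f x (g x)) -> (forall x, continuity_pt g x) ->
  RiemannInt pr = f v * gauss v - f u * gauss u.
Proof.
  intros Huv Hf Hg. rewrite <- (RInt_Reals _ _ _ pr). apply is_RInt_unique.
  apply (is_RInt_derive (fun x => f x * gauss x)).
  - intros x _. apply is_derive_Reals. apply Fderiv; auto.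
  - intros x _. apply continuity_pt_filterlim. apply Fcont; auto.
Qed.

Lemma gauss_even x : gauss (- x) = gauss x.
Proof. unfold gauss. f_equal. ring. Qed.

Lemma pinf_ibp f g a l : polyf f -> (forall x, derivable_pt_lim f x (g x)) -> (forall x, continuity_pt g x) ->
  int_to_pinf (fun x => (g x - 2 * x * f x) * gauss x) a l -> l = - (f a * gauss a).
Proof.
  intros [k [c Hc]] Hf Hg [Hi Hl]. symmetry. apply close_eq. intros eps He.
  destruct (Hl eps He) as [M HM].
  destruct (decay c k eps (Rmax M a) He) as [b [Hb Hd]].
  destruct (Hi b) as [pr]. exists (RiemannInt pr). split.
  - rewrite (ftc f g a b pr); auto. rewrite <- Hc in Hd.
    replace (f b * gauss b - f a * gauss a - - (f a * gauss a)) with (f b * gauss b) by ring. auto.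
    eapply Rle_trans; [apply Rmax_r | exact Hb].
  - apply HM. eapply Rle_trans; [apply Rmax_l | exact Hb].
Qed.

Lemma minf_ibp f g a l : polyf f -> (forall x, derivable_pt_lim f x (g x)) -> (forall x, continuity_pt g x) ->
  int_from_minf (fun x => (g x - 2 * x * f x) * gauss x) (- a) l -> l = f (- a) * gauss (- a).
Proof.
  intros [k Hk] Hf Hg [Hi Hl]. destruct (polyd_neg _ _ Hk) as [c Hc].
  symmetry. apply close_eq. intros eps He.
  destruct (Hl eps He) as [M HM].
  destruct (decay c k eps (Rmax (- M) a) He) as [b [Hb Hd]].
  assert (HbM : - M <= b) by (eapply Rle_trans; [apply Rmax_l | exact Hb]).
  assert (Hba : a <= b) by (eapply Rle_trans; [apply Rmax_r | exact Hb]).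
  destruct (Hi (- b)) as [pr]. exists (RiemannInt pr). split.
  - rewrite (ftc f g (- b) (- a) pr); auto; [|lra]. rewrite <- Hc, <- gauss_even in Hd.
    replace (f (- a) * gauss (- a) - f (- b) * gauss (- b) - f (- a) * gauss (- a)) with (- (f (- b) * gauss (- b))) by ring.
    rewrite Rabs_Ropp. auto.
  - apply HM. lra.
Qed.

Lemma wint_ibp a f g l : polyf f -> (forall x, derivable_pt_lim f x (g x)) -> (forall x, continuity_pt g x) ->
  wint a (fun x => g x - 2 * x * f x) l -> l = exp (- a ^ 2) * (f (- a) - f a).
Proof.
  intros Hp Hf Hg [l1 [l2 [H1 [H2 H3]]]].
  rewrite (minf_ibp f g a l1 Hp Hf Hg H1) in H3. rewrite (pinf_ibp f g a l2 Hp Hf Hg H2) in H3.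
  rewrite gauss_even in H3. unfold gauss in H3. subst. ring.
Qed.

Lemma int_ge f u v (pr : Riemann_integrable f u v) m : u <= v -> (forall x, u < x < v -> m <= f x) ->
  m * (v - u) <= RiemannInt pr.
Proof.
  intros Huv H. rewrite <- (RiemannInt_const m u v (Riemann_integrable_const m u v)).
  apply RiemannInt_P19; auto.
Qed.

Lemma polyd_cont k f x : polyd k f -> continuity_pt f x.
Proof.
  intros [c Hc]. replace f with (psum c k) by (apply functional_extensionality; intros; auto).
  apply derivable_continuous_pt. exists (dpsum c k x). apply psum_deriv.
Qed.

Lemma wint_pos a q l k : 0 < a -> polyd k q -> (exists X, a <= X /\ forall x, X <= x -> 1 <= q x ^ 2) ->
  wint a (fun x => q x ^ 2) l -> 0 < l.
Proof.
  intros Ha Hq [X [HX Hq1]] [l1 [l2 [[Hi1 H1] [[Hi2 H2] E]]]].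
  assert (Cont : forall u v, u <= v -> Riemann_integrable (fun x => q x ^ 2 * gauss x) u v).
  { intros u v Huv. apply continuity_implies_RiemannInt; auto. intros x _.
    apply continuity_pt_mult; [| apply gauss_cont]. apply continuity_pt_mult; [eapply polyd_cont; eauto|].
    apply continuity_pt_mult; [eapply polyd_cont; eauto| apply continuity_pt_const; intros ? ?; auto]. }
  assert (Hnn : forall x, 0 <= q x ^ 2 * gauss x).
  { intros x. apply Rmult_le_pos. apply pow2_ge_0. left; apply exp_pos. }
  assert (L1 : 0 <= l1).
  { destruct (Rle_lt_dec 0 l1); auto. destruct (H1 (- l1)) as [M HM]. lra.
    destruct (Hi1 (Rmin M (- a))) as [pr]. specialize (HM _ pr (Rmin_l _ _)).
    assert (0 * (- a - Rmin M (- a)) <= RiemannInt pr) by (apply int_ge; [apply Rmin_r | intros; apply Hnn]).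
    revert HM H. unfold Rabs; destruct Rcase_abs; lra. }
  set (d := gauss (X + 1)).
  assert (Hd : 0 < d) by apply exp_pos.
  assert (L2 : d / 2 <= l2).
  { destruct (H2 (d / 2)) as [M HM]. lra.
    set (b := Rmax M (X + 1)).
    assert (Hb : X + 1 <= b) by apply Rmax_r.
    destruct (Hi2 b) as [pr]. specialize (HM _ pr (Rmax_l _ _)).
    pose (p1 := Cont a X HX). pose (p2 := Cont X (X + 1) ltac:(lra)). pose (p3 := Cont (X+1) b Hb).
    pose (p12 := Cont a (X + 1) ltac:(lra)).
    rewrite <- (RiemannInt_P26 p12 p3 pr) in HM. rewrite <- (RiemannInt_P26 p1 p2 p12) in HM.
    assert (0 * (X - a) <= RiemannInt p1) by (apply int_ge; auto; intros; apply Hnn).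
    assert (0 * (b - (X + 1)) <= RiemannInt p3) by (apply int_ge; auto; intros; apply Hnn).
    assert (d * (X + 1 - X) <= RiemannInt p2).
    { apply int_ge; [lra|]. intros x Hx. unfold d, gauss.
      assert (1 <= q x ^ 2) by (apply Hq1; lra).
      assert (exp (- (X + 1) ^ 2) <= exp (- x ^ 2)).
      { assert (0 <= x) by lra. assert (Hxx : - (X + 1) ^ 2 <= - x ^ 2) by nra. destruct Hxx as [Hxx|Hxx]; [left; apply exp_increasing; auto| rewrite Hxx; lra]. }
      pose proof (exp_pos (- (X + 1) ^ 2)). nra. }
    revert HM. unfold Rabs; destruct Rcase_abs; lra. }
  lra.
Qed.

Lemma monic_big k c : exists X, forall x, X <= x -> 1 <= (x ^ k + psum c k x) ^ 2.
Proof.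
  exists (1 + SA c k). intros x Hx. pose proof (SA_pos c k).
  assert (Hx1 : 1 <= x) by lra. pose proof (psum_bound c k x Hx1).
  assert (1 <= x ^ k + psum c k x).
  { destruct k.
    - simpl in *. rewrite Rabs_R0 in H0. assert (psum c 0 x = 0) by auto. simpl. lra.
    - simpl pred in H0. assert (1 <= x ^ k) by (apply pow_R1_Rle; lra).
      assert (- (SA c (S k) * x ^ k) <= psum c (S k) x) by (revert H0; unfold Rabs; destruct Rcase_abs; lra).
      assert (E : x ^ S k = x * x ^ k) by (simpl; ring). rewrite E.
      assert (x ^ k * (x - SA c (S k)) >= x ^ k * 1) by (apply Rle_ge, Rmult_le_compat_l; lra).
      nra. }
  nra.
Qed.

Lemma polyf_lin f g r : polyf f -> polyf g -> polyf (fun x => f x + r * g x).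
Proof. intros [k Hk] [m Hm]. exists (max k m). apply polyd_lin; [apply (polyd_mono k)|apply (polyd_mono m)]; auto; lia. Qed.
Lemma polyf_mul f g : polyf f -> polyf g -> polyf (fun x => f x * g x).
Proof. intros [k Hk] [m Hm]. exists (k + m)%nat. apply polyd_mul; auto. Qed.
Lemma polyf_mon j : polyf (fun x => x ^ j).
Proof. exists (S j). apply polyd_mon. Qed.
Lemma polyf_ext f g : polyf f -> (forall x, f x = g x) -> polyf g.
Proof. intros [k Hk] E. exists k. eapply polyd_ext; eauto. Qed.
Lemma polyf_neg f : polyf f -> polyf (fun x => f (- x)).
Proof. intros [k Hk]. exists k. apply polyd_neg; auto. Qed.
Lemma polyf_psum c k : polyf (psum c k).
Proof. exists k, c. auto. Qed.
Lemma polyf_sub f g : polyf f -> polyf g -> polyf (fun x => f x - g x).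
Proof. intros. apply (polyf_ext (fun x => f x + -1 * g x)). apply polyf_lin; auto. intros; simpl; ring. Qed.
Lemma polyf_const r : polyf (fun _ => r).
Proof. exists 1%nat, (fun _ => r). intros; simpl; ring. Qed.
Lemma polyf_scal f r : polyf f -> polyf (fun x => r * f x).
Proof. intros. apply (polyf_mul (fun _ => r) f); auto. apply polyf_const. Qed.
Lemma polyf_x : polyf (fun x => x).
Proof. apply (polyf_ext (fun x => x ^ 1)). apply (polyf_mon 1). intros; simpl; ring. Qed.

Section OP.
Variable a : R.
Variable P : nat -> R -> R.
Variable h : nat -> R.
Hypothesis Ha : 0 < a.
Hypothesis HOP : monic_OP_family a P h.

Definition LI (f : R -> R) : R := epsilon (inhabits 0) (fun l => wint a f l).

Lemma LI_eq f l : wint a f l -> LI f = l.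
Proof.
  intros H. assert (wint a f (LI f)) by (apply (epsilon_spec (inhabits 0) (fun l => wint a f l)); eauto).
  eapply wint_unique; eauto.
Qed.

Lemma LI_ext f g : (forall x, f x = g x) -> LI f = LI g.
Proof. intros E. replace g with f; auto. apply functional_extensionality; auto. Qed.

Lemma Pform k : exists c, forall x, P k x = x ^ k + psum c k x.
Proof. destruct (HOP k) as [[c Hc] _]. eauto. Qed.

Lemma psum_int k c : (forall i, (i < k)%nat -> exists l, wint a (fun x => x ^ i) l) ->
  (exists l0, wint a (fun _ => 0) l0) -> exists l, wint a (psum c k) l.
Proof.
  intros H Z. induction k.
  - destruct Z as [l0 Z]. exists l0. eapply wint_ext; eauto. intros; simpl; auto.
  - destruct IHk as [l1 H1]. intros; apply H; lia. destruct (H k) as [l2 H2]. lia.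
    eexists. eapply wint_ext. apply (wint_lin _ _ _ _ _ (c k) H1 H2). intros; simpl; ring.
Qed.

Lemma mon_int : forall m, exists l, wint a (fun x => x ^ m) l.
Proof.
  assert (M0 : exists l, wint a (fun x => x ^ 0) l).
  { destruct (HOP 0%nat) as [[c Hc] [_ H2]]. exists (h 0). eapply wint_ext; eauto. intros; simpl; rewrite Hc; simpl; ring. }
  assert (Z : exists l0, wint a (fun _ => 0) l0).
  { destruct M0 as [l H]. eexists. eapply wint_ext. apply (wint_lin _ _ _ _ _ (-1) H H). intros; simpl; ring. }
  intros m. induction m as [m IH] using (well_founded_induction Wf_nat.lt_wf). destruct m as [|m]; auto.
  destruct (HOP (S m)) as [[c Hc] [H1 _]].
  destruct (psum_int (S m) c) as [l2 H2]; auto.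
  specialize (H1 0%nat ltac:(lia)).
  eexists. eapply wint_ext. apply (wint_lin _ _ _ _ _ (-1) H1 H2). intros; simpl. rewrite Hc. simpl. ring.
Qed.

Lemma zero_int : exists l0, wint a (fun _ => 0) l0.
Proof. destruct (mon_int 0%nat) as [l H]. eexists. eapply wint_ext. apply (wint_lin _ _ _ _ _ (-1) H H). intros; simpl; ring. Qed.

Lemma polyf_int f : polyf f -> wint a f (LI f).
Proof.
  intros [k [c Hc]]. destruct (psum_int k c) as [l H]. intros; apply mon_int. apply zero_int.
  rewrite (LI_eq f l); eapply wint_ext; eauto; intros; simpl; auto.
Qed.

Lemma LI_lin f g r : polyf f -> polyf g -> LI (fun x => f x + r * g x) = LI f + r * LI g.
Proof. intros Hf Hg. apply LI_eq. apply wint_lin; apply polyf_int; auto. Qed.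

Lemma LI_sub f g : polyf f -> polyf g -> LI (fun x => f x - g x) = LI f - LI g.
Proof. intros Hf Hg. rewrite (LI_ext _ (fun x => f x + (-1) * g x)) by (intros; ring). rewrite LI_lin; auto. ring. Qed.

Lemma LI_scal f r : polyf f -> LI (fun x => r * f x) = r * LI f.
Proof.
  intros Hf. assert (LI (fun x => 0) = 0).
  { rewrite (LI_ext _ (fun x => f x - f x)) by (intros; ring). rewrite LI_sub; auto. ring. }
  rewrite (LI_ext _ (fun x => 0 + r * f x)) by (intros; ring).
  rewrite (LI_lin (fun _ => 0)); auto. rewrite H; ring. apply polyf_const.
Qed.

Lemma polyf_P k : polyf (P k).
Proof. destruct (Pform k) as [c Hc]. apply (polyf_ext (fun x => x ^ k + 1 * psum c k x)).
  apply polyf_lin. apply polyf_mon. apply polyf_psum. intros; rewrite Hc; ring. Qed.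

Lemma polyd_P k : polyd (S k) (P k).
Proof. destruct (Pform k) as [c Hc]. apply (polyd_ext _ (fun x => x ^ k + 1 * psum c k x)).
  apply polyd_lin. apply polyd_mon. apply (polyd_mono k). lia. exists c; auto. intros; rewrite Hc; ring. Qed.

Lemma LI_orth k j : (j < k)%nat -> LI (fun x => P k x * x ^ j) = 0.
Proof. intros. apply LI_eq. destruct (HOP k) as [_ [H1 _]]. auto. Qed.

Lemma LI_norm k : LI (fun x => P k x ^ 2) = h k.
Proof. apply LI_eq. destruct (HOP k) as [_ [_ H1]]. auto. Qed.

Lemma ortho_gen q m r : polyf q -> (forall j, (j < m)%nat -> LI (fun x => q x * x ^ j) = 0) ->
  polyd m r -> LI (fun x => q x * r x) = 0.
Proof.
  intros Hq H [d Hd]. rewrite (LI_ext _ (fun x => q x * psum d m x)) by (intros; rewrite Hd; auto).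
  assert (forall k, (k <= m)%nat -> LI (fun x => q x * psum d k x) = 0); auto.
  induction k; intros Hk.
  - rewrite (LI_ext _ (fun x => 0 * q x)) by (intros; simpl; ring). rewrite LI_scal; auto. ring.
  - rewrite (LI_ext _ (fun x => q x * psum d k x + d k * (q x * x ^ k))) by (intros; simpl; ring).
    rewrite LI_lin. rewrite IHk, H; auto; try lia. ring.
    apply polyf_mul; auto; apply polyf_psum. apply polyf_mul; auto; apply polyf_mon.
Qed.

Lemma ortho_P k r : polyd k r -> LI (fun x => P k x * r x) = 0.
Proof. intros. eapply ortho_gen; eauto. apply polyf_P. intros; apply LI_orth; auto. Qed.

Lemma LI_norm' k : LI (fun x => P k x * x ^ k) = h k.
Proof.
  destruct (Pform k) as [c Hc]. rewrite <- LI_norm.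
  rewrite (LI_ext (fun x => P k x ^ 2) (fun x => P k x * x ^ k + 1 * (P k x * psum c k x))) by (intros; rewrite Hc; ring).
  rewrite LI_lin. rewrite (ortho_P k (psum c k)). ring. exists c; auto.
  apply polyf_mul; [apply polyf_P| apply polyf_mon]. apply polyf_mul; [apply polyf_P| apply polyf_psum].
Qed.

Lemma h_pos k : 0 < h k.
Proof.
  destruct (HOP k) as [[c Hc] [_ H2]]. eapply (wint_pos a (P k)); eauto. apply polyd_P.
  destruct (monic_big k c) as [X HX]. exists (Rmax a X). split. apply Rmax_l.
  intros x Hx. rewrite Hc. apply HX. eapply Rle_trans; [apply Rmax_r| exact Hx].
Qed.


Lemma polyf_cont f x : polyf f -> continuity_pt f x.
Proof. intros [k Hk]. eapply polyd_cont; eauto. Qed.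

Lemma LI_ibp f g : polyf f -> polyf g -> (forall x, derivable_pt_lim f x (g x)) ->
  LI g - 2 * LI (fun x => x * f x) = exp (- a ^ 2) * (f (- a) - f a).
Proof.
  intros Hf Hg Hd. assert (Hxf : polyf (fun x => x * f x)) by (apply polyf_mul; auto; apply polyf_x).
  apply (wint_ibp a f g); auto. intros; apply polyf_cont; auto.
  replace (LI g - 2 * LI (fun x => x * f x)) with (LI (fun x => g x + (-2) * (x * f x))) by (rewrite LI_lin; auto; ring).
  eapply wint_ext. apply polyf_int. apply polyf_lin; auto. intros; simpl; ring.
Qed.

Lemma mu_odd j : LI (fun x => x ^ (2 * j + 1)) = 0.
Proof.
  induction j.
  - pose proof (LI_ibp (fun x => x ^ 0) (fun x => INR 0 * x ^ pred 0) (polyf_mon 0) ltac:(apply polyf_scal, polyf_mon)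
      (fun x => derivable_pt_lim_pow x 0)) as H.
    rewrite LI_scal in H by apply polyf_mon. replace (INR 0) with 0 in H by auto.
    replace ((- a) ^ 0 - a ^ 0) with 0 in H by ring.
    rewrite (LI_ext _ (fun x => x * x ^ 0)) by (intros; simpl; ring). lra.
  - set (m := (2 * S j)%nat).
    pose proof (LI_ibp (fun x => x ^ m) (fun x => INR m * x ^ pred m) (polyf_mon m) ltac:(apply polyf_scal, polyf_mon)
      (fun x => derivable_pt_lim_pow x m)) as H.
    rewrite LI_scal in H by apply polyf_mon.
    replace (pred m) with (2 * j + 1)%nat in H by (unfold m; lia). rewrite IHj in H.
    replace ((- a) ^ m) with (a ^ m) in H by (unfold m; rewrite !pow_mult; f_equal; ring).
    rewrite (LI_ext (fun x => x * x ^ m) (fun x => x ^ (2 * S j + 1))) in H by (intros; unfold m; rewrite Nat.add_1_r; simpl; ring).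
    unfold m in *. lra.
Qed.

Lemma LI_negmon k : LI (fun x => (- x) ^ k) = LI (fun x => x ^ k).
Proof.
  rewrite (LI_ext _ (fun x => (-1) ^ k * x ^ k)) by (intros; rewrite <- Rpow_mult_distr; f_equal; ring).
  rewrite LI_scal by apply polyf_mon. destruct (Nat.Even_or_Odd k) as [[j Hj]|[j Hj]]; subst.
  - rewrite pow_mult. replace ((-1) ^ 2) with 1 by ring. rewrite pow1. ring.
  - rewrite mu_odd. ring.
Qed.

Lemma LI_psum_neg c k : LI (fun x => psum c k (- x)) = LI (psum c k).
Proof.
  induction k.
  - simpl. auto.
  - simpl. rewrite (LI_lin (fun x => psum c k (- x)) (fun x => (- x) ^ k) (c k)), IHk, LI_negmon.
    rewrite (LI_lin (psum c k) (fun x => x ^ k) (c k)); auto. apply polyf_psum. apply polyf_mon.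
    apply polyf_neg, polyf_psum. apply (polyf_neg (fun x => x ^ k)), polyf_mon.
Qed.

Lemma LI_neg f : polyf f -> LI (fun x => f (- x)) = LI f.
Proof.
  intros [k [c Hc]]. rewrite (LI_ext f (psum c k)) by auto.
  rewrite (LI_ext _ (fun x => psum c k (- x))) by auto. apply LI_psum_neg.
Qed.

Lemma LI_odd g : polyf g -> (forall x, g (- x) = - g x) -> LI g = 0.
Proof.
  intros Hg Hodd. pose proof (LI_neg g Hg) as H.
  rewrite (LI_ext _ (fun x => (-1) * g x)) in H by (intros; rewrite Hodd; ring).
  rewrite LI_scal in H; auto. lra.
Qed.

Lemma uniq0 k d : (forall j, (j < k)%nat -> LI (fun x => psum d k x * x ^ j) = 0) -> forall x, psum d k x = 0.
Proof.
  induction k; intros H.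
  - intros; simpl; auto.
  - assert (Hd : d k = 0).
    { assert (E : LI (fun x => psum d (S k) x * P k x) = 0).
      { apply (ortho_gen _ (S k)); auto. apply polyf_psum. apply polyd_P. }
      rewrite (LI_ext _ (fun x => P k x * psum d k x + d k * (P k x * x ^ k))) in E by (intros; simpl; ring).
      rewrite LI_lin, LI_norm', ortho_P in E. pose proof (h_pos k). nra.
      exists d; auto. apply polyf_mul; [apply polyf_P| apply polyf_psum]. apply polyf_mul; [apply polyf_P| apply polyf_mon]. }
    assert (E2 : forall x, psum d (S k) x = psum d k x) by (intros; simpl; rewrite Hd; ring).
    intros x. rewrite E2. apply IHk. intros j Hj. rewrite <- (H j); [|lia]. apply LI_ext. intros; rewrite E2; auto.
Qed.


Lemma polyf_Pneg k : polyf (fun x => P k (- x)).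
Proof. exact (polyf_neg (P k) (polyf_P k)). Qed.
Lemma polyf_negmon j : polyf (fun x => (- x) ^ j).
Proof. exact (polyf_neg (fun x => x ^ j) (polyf_mon j)). Qed.

Ltac pf := repeat first [ apply polyf_P | apply polyf_Pneg | apply polyf_mon | apply polyf_negmon | apply polyf_psum | apply polyf_x | apply polyf_const | apply polyf_mul | apply polyf_lin | apply polyf_sub | apply polyf_scal ].

Lemma sgn2 k : (-1) ^ k * (-1) ^ k = 1.
Proof. rewrite <- Rpow_mult_distr. replace (-1 * -1) with 1 by ring. apply pow1. Qed.

Lemma parity k x : P k (- x) = (-1) ^ k * P k x.
Proof.
  destruct (Pform k) as [c Hc].
  set (d := fun i => (-1) ^ k * ((-1) ^ i * c i) + (-1) * c i).
  assert (Ed : forall y, psum d k y = (-1) ^ k * P k (- y) - P k y).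
  { intros y. unfold d. rewrite psum_add, psum_scal, psum_scal, psum_neg, !Hc.
    replace (y ^ k) with ((-1) ^ k * (- y) ^ k). ring. rewrite <- Rpow_mult_distr. f_equal. ring. }
  assert (Z : forall y, psum d k y = 0).
  { apply uniq0. intros j Hj.
    rewrite (LI_ext _ (fun y => ((-1) ^ k * (-1) ^ j) * ((fun z => P k z * z ^ j) (- y)) + (-1) * (P k y * y ^ j))).
    2:{ intros y. cbv beta. rewrite Ed. replace ((- y) ^ j) with ((-1) ^ j * y ^ j) by (rewrite <- Rpow_mult_distr; f_equal; ring).
        transitivity (((-1) ^ k * P k (- y)) * y ^ j * ((-1) ^ j * (-1) ^ j) - P k y * y ^ j).
        rewrite sgn2. ring. ring. }
    rewrite (LI_lin (fun y => ((-1) ^ k * (-1) ^ j) * ((fun z => P k z * z ^ j) (- y))) (fun y => P k y * y ^ j) (-1)); [|pf|pf].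
    rewrite (LI_scal (fun y => (fun z => P k z * z ^ j) (- y))); [|pf].
    rewrite (LI_neg (fun z => P k z * z ^ j)); [|pf]. rewrite LI_orth; auto. ring. }
  specialize (Z x). rewrite Ed in Z. pose proof (sgn2 k).
  transitivity ((-1) ^ k * ((-1) ^ k * P k (- x))). rewrite <- Rmult_assoc, H; ring. f_equal; lra.
Qed.


Lemma negpow y n : (- y) ^ n = (-1) ^ n * y ^ n.
Proof. rewrite <- Rpow_mult_distr. f_equal. ring. Qed.

Lemma LI_Pmon_odd k n : Nat.Odd (k + n) -> LI (fun y => P k y * y ^ n) = 0.
Proof.
  intros [t Ht]. apply LI_odd. pf. intros y. rewrite parity, negpow.
  assert (E : (-1) ^ k * (-1) ^ n = -1).
  { rewrite <- pow_add, Ht, pow_add, pow_mult. replace ((-1) ^ 2) with 1 by ring. rewrite pow1. ring. }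
  transitivity (((-1) ^ k * (-1) ^ n) * (P k y * y ^ n)). ring. rewrite E. ring.
Qed.

Lemma recur m x : x * P (S m) x = P (S (S m)) x + (h (S m) / h m) * P m x.
Proof.
  set (b := h (S m) / h m).
  destruct (Pform (S m)) as [c1 H1]. destruct (Pform (S (S m))) as [c2 H2].
  assert (Hd : polyd (S (S m)) (fun y => y * P (S m) y - P (S (S m)) y - b * P m y)).
  { apply (polyd_ext _ (fun y => (fun y => y * psum c1 (S m) y) y + (-1) * ((fun y => psum c2 (S (S m)) y + b * P m y) y))).
    apply polyd_lin. apply polyd_mulx. exists c1; auto. apply polyd_lin. exists c2; auto.
    apply (polyd_mono (S m)); [lia| apply polyd_P].
    intros y. cbv beta. rewrite H1, H2. simpl. ring. }
  destruct Hd as [d Hd].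
  assert (Z : forall y, psum d (S (S m)) y = 0).
  { apply uniq0. intros j Hj.
    rewrite (LI_ext _ (fun y => P (S m) y * y ^ (S j) + (-1) * ((fun y => P (S (S m)) y * y ^ j + b * (P m y * y ^ j)) y))).
    2:{ intros y. rewrite <- Hd. simpl. ring. }
    rewrite LI_lin; [|pf|pf]. rewrite LI_lin; [|pf|pf]. rewrite (LI_orth (S (S m))) by lia.
    destruct (Nat.lt_ge_cases j m).
    - rewrite !LI_orth by lia. ring.
    - destruct (Nat.eq_dec j m).
      + subst j. rewrite LI_norm', LI_norm'. unfold b. pose proof (h_pos m). field. lra.
      + assert (j = S m) by lia. subst j.
        rewrite !LI_Pmon_odd. ring. exists m; lia. exists (S m); lia. }
  specialize (Z x). rewrite <- Hd in Z. lra.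
Qed.



Lemma I1 m : INR (S m) * h m = 2 * h (S m) - 2 * exp (- a ^ 2) * P (S m) a * P m a.
Proof.
  destruct (Pform (S m)) as [c1 H1]. destruct (Pform m) as [c0 H0].
  set (d1 := fun y => INR (S m) * y ^ m + dpsum c1 (S m) y).
  set (d0 := fun y => INR m * y ^ pred m + dpsum c0 m y).
  assert (D1 : forall y, derivable_pt_lim (P (S m)) y (d1 y)).
  { intros y. replace (P (S m)) with (fun y => y ^ (S m) + psum c1 (S m) y) by (apply functional_extensionality; intros; auto).
    apply (derivable_pt_lim_plus (fun y => y ^ (S m)) (psum c1 (S m))). apply derivable_pt_lim_pow. apply psum_deriv. }
  assert (D0 : forall y, derivable_pt_lim (P m) y (d0 y)).
  { intros y. replace (P m) with (fun y => y ^ m + psum c0 m y) by (apply functional_extensionality; intros; auto).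
    apply (derivable_pt_lim_plus (fun y => y ^ m) (psum c0 m)). apply derivable_pt_lim_pow. apply psum_deriv. }
  assert (Pd1 : polyd m (dpsum c1 (S m))) by apply (dpsum_polyd c1 (S m)).
  assert (Pd0 : polyd (S m) d0).
  { unfold d0. apply polyd_add. apply polyd_scal. apply (polyd_mono (S (pred m))). lia. apply polyd_mon.
    apply (polyd_mono (pred m)). lia. apply dpsum_polyd. }
  assert (pd1 : polyf d1) by (unfold d1; apply (polyf_ext (fun y => INR (S m) * y ^ m + 1 * dpsum c1 (S m) y)); [apply polyf_lin; [apply polyf_scal, polyf_mon| exists m; auto] | intros; ring]).
  assert (pd0 : polyf d0) by (exists (S m); auto).
  assert (Der : forall x, derivable_pt_lim (fun y => P (S m) y * P m y) x (d1 x * P m x + 1 * (P (S m) x * d0 x))).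
  { intros x. replace (d1 x * P m x + 1 * (P (S m) x * d0 x)) with (d1 x * P m x + P (S m) x * d0 x) by ring.
    apply (derivable_pt_lim_mult (P (S m)) (P m)); auto. }
  assert (pf1 : polyf (fun y => P (S m) y * P m y)) by pf.
  assert (pf2 : polyf (fun y => d1 y * P m y + 1 * (P (S m) y * d0 y))) by (apply polyf_lin; apply polyf_mul; auto; pf).
  pose proof (LI_ibp (fun y => P (S m) y * P m y) (fun y => d1 y * P m y + 1 * (P (S m) y * d0 y)) pf1 pf2 Der) as E.
  rewrite LI_lin in E; [| apply polyf_mul; auto; pf | apply polyf_mul; auto; pf].
  rewrite (LI_ext (fun y => d1 y * P m y) (fun y => P m y * y ^ m * INR (S m) + 1 * (P m y * dpsum c1 (S m) y))) in E
    by (intros; unfold d1; ring).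
  rewrite LI_lin in E; [| pf | apply polyf_mul; [pf | exists m; auto]].
  rewrite (LI_ext (fun y => P m y * y ^ m * INR (S m)) (fun y => INR (S m) * (P m y * y ^ m))) in E by (intros; ring).
  rewrite LI_scal in E by pf. rewrite LI_norm' in E. rewrite (ortho_P m (dpsum c1 (S m))) in E by auto.
  rewrite (ortho_P (S m) d0) in E by auto.
  rewrite (LI_ext (fun y => y * (P (S m) y * P m y)) (fun y => P (S m) y * y ^ (S m) + 1 * (P (S m) y * (y * psum c0 m y)))) in E
    by (intros z; rewrite (H0 z); simpl; ring).
  rewrite LI_lin in E; [| pf | apply polyf_mul; [pf | apply polyf_mul; pf]].
  rewrite LI_norm' in E. rewrite (ortho_P (S m) (fun y => y * psum c0 m y)) in E by (apply polyd_mulx; exists c0; auto).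
  rewrite !parity in E. 
  assert (S2 : (-1) ^ S m * (-1) ^ m = -1) by (transitivity (-1 * ((-1) ^ m * (-1) ^ m)); [simpl; ring| rewrite sgn2; ring]).
  replace ((-1) ^ S m * P (S m) a * ((-1) ^ m * P m a)) with (((-1) ^ S m * (-1) ^ m) * (P (S m) a * P m a)) in E by ring.
  rewrite S2 in E. lra.
Qed.


End OP.
Lemma alg (N a e p0 p1 p2 h0 h1 h2 : R) : 0 < h0 -> 0 < h1 -> 0 < h2 ->
  N * h0 = 2 * h1 - 2 * e * p1 * p0 ->
  (N + 1) * h1 = 2 * h2 - 2 * e * p2 * p1 ->
  a * p1 = p2 + h1 / h0 * p0 ->
  let R0 := 2 * e * p0 ^ 2 / h0 in let R1 := 2 * e * p1 ^ 2 / h1 in let R2 := 2 * e * p2 ^ 2 / h2 in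
  R0 * R2 * (R1 * R0 + 8 * N) * (R2 * R1 + 8 * N + 8)
  = (8 * a ^ 2 * R1 + R1 * R0 * R2 - 4 * (a * R1 + N + 1) * R2 - 4 * (a * R1 + N) * R0) ^ 2.
Proof.
  intros H0 H1 H2 E1 E2 E3 R0 R1 R2.
  assert (Eh1 : h1 = (N * h0 + 2 * e * p1 * p0) / 2) by lra.
  assert (Eh2 : h2 = ((N + 1) * h1 + 2 * e * p2 * p1) / 2) by lra.
  assert (Ep2 : p2 = a * p1 - h1 / h0 * p0) by lra.
  unfold R0, R1, R2. rewrite Eh2. rewrite Ep2. rewrite Eh1.
  field. replace (N * h0 + 2 * e * p1 * p0) with (2 * h1) by lra.
  split; [lra|]. split; [lra|].
  replace ((N + 1) * (2 * h1) * h0 + e * (a * p1 * (2 * h0) - 2 * h1 * p0) * p1 * 2) with (4 * h0 * h2).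
  apply Rgt_not_eq. apply Rmult_gt_0_compat; lra.
  rewrite Eh2, Ep2. field. lra.
Qed.
Theorem mainTheorem5 (a : R) (P : nat -> R -> R) (h : nat -> R) (n : nat) :
  0 < a -> (1 <= n)%nat -> monic_OP_family a P h ->
  let R_ := Rn a P h in
  let nn := INR n in
  R_ (n - 1)%nat * R_ (n + 1)%nat
    * (R_ n * R_ (n - 1)%nat + 8 * nn)
    * (R_ (n + 1)%nat * R_ n + 8 * nn + 8)
  = (8 * a ^ 2 * R_ n + R_ n * R_ (n - 1)%nat * R_ (n + 1)%nat
     - 4 * (a * R_ n + nn + 1) * R_ (n + 1)%nat
     - 4 * (a * R_ n + nn) * R_ (n - 1)%nat) ^ 2.
Proof.
  intros Ha Hn HOP R_ nn. destruct n as [|m]; [lia|].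
  replace (S m - 1)%nat with m by lia. replace (S m + 1)%nat with (S (S m)) by lia.
  unfold R_, Rn, nn.
  pose proof (I1 a P h Ha HOP m) as E1. pose proof (I1 a P h Ha HOP (S m)) as E2.
  rewrite (S_INR (S m)) in E2. pose proof (recur a P h Ha HOP m a) as E3.
  pose proof (alg (INR (S m)) a (exp (- a ^ 2)) (P m a) (P (S m) a) (P (S (S m)) a) (h m) (h (S m)) (h (S (S m)))
    (h_pos a P h Ha HOP m) (h_pos a P h Ha HOP (S m)) (h_pos a P h Ha HOP (S (S m))) E1 E2 E3) as A.
  cbv zeta in A. exact A.
Qed.
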